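(* Let $j\ge1$ and $s\ge0$ be integers and let $g=g_{j,s,1}$ be the sequence defined in the context (case $\lambda=1$). Then $g$ is non-decreasing, $g(n)\equiv 1 \pmod j$ for all $n\ge1$, and its frequency function $\phi(q)=\#\{n\ge1: g(n)=q\}$ satisfies, for every positive integer $q$, \[ \phi(q)=\begin{cases} q+s, & q\equiv 1 \pmod j,\\ 0, & \text{otherwise.}\end{cases} \] Equivalently, $g$ is the sequence $1^{s+1},(j+1)^{s+j+1},(2j+1)^{s+2j+1},\dots$, where $a^{b}$ denotes the value $a$ repeated $b$ times.
   Context: Fix integers $j\ge1$, $\lambda\ge1$, $s\ge0$. Define a labeled infinite rooted tree $\mathcal K$ as follows. It has ''supernodes'' $S_0,S_1,S_2,\dots$ with an edge between $S_i$ and $S_{i+1}$ for every $i\ge0$ ($S_0$ is the root). $S_0$ has two further children: the ''initial leaf'' and a node $N_0$, which is a leaf. For each $i\ge1$, $S_i$ has a child $N_i$ (the ''knot node''), and attached to $N_i$ are $\lambda$ chains, each a path of $i\cdot j$ nodes hanging from $N_i$; the last (bottom) node of each chain is a leaf. Each supernode carries $s$ labels and every other node carries exactly one label. The labels are the consecutive positive integers $1,2,3,\dots$, assigned in the following order: initial leaf, $S_0$, $N_0$; then for $i=1,2,3,\dots$: $S_i$ (its $s$ labels), $N_i$, then the nodes of the first chain of $N_i$ from top to bottom, then the second chain, ..., then the $\lambda$-th chain. The initial leaf has weight $1$; every other leaf of $\mathcal K$ (namely $N_0$ and the bottom node of each chain) has weight $j$. The leaf weight sequence $w(n)=w_{j,s,\lambda}(n)$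 ($n\ge1$) is the total weight of the leaves of $\mathcal K$ whose label is $\le n$. Explicitly, $w(n)=1+j\cdot\#\{\ell\in L:\ell\le n\}$, where $L$ consists of the number $s+2$ together with the numbers $L_{i,c}=s+2+\sum_{l=1}^{i-1}(s+1+\lambda l j)+s+1+c\,i\,j$ for $i\ge1$, $1\le c\le\lambda$. The sequence $g_{j,s,\lambda}$ is defined by $g_{j,s,\lambda}(n)=w_{j,s,\lambda}(n)$ for $1\le n\le 3+2s+\lambda j$ and $g_{j,s,\lambda}(n)=g_{j,s,\lambda}(n-s-g_{j,s,\lambda}(n-j))+\lambda j$ for $n>3+2s+\lambda j$ (this is well defined). In the case $\lambda=1$, $L=\{p_m: m\ge0\}$ with $p_m=1+\sum_{i=0}^{m}(s+ij+1)$. *)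

(* Defs.v *)
From mathcomp Require Import all_boot.
Set Implicit Arguments. Unset Strict Implicit. Unset Printing Implicit Defensive.

Definition Lic (j s lam i c : nat) : nat :=
  s + 2 + sumn [seq s + 1 + lam * l * j | l <- iota 1 i.-1] + (s + 1) + c * i * j.

(* w(n) = 1 + j * #{ l in L : l <= n }, L = {s+2} u {L_{i,c} : i>=1, 1<=c<=lam}.
   Since L_{i,c} > i for j >= 1, only indices i <= n can contribute. *)
Definition wseq (j s lam n : nat) : nat :=
  1 + j * ((s + 2 <= n) +
           sumn [seq sumn [seq nat_of_bool (Lic j s lam i c <= n) | c <- iota 1 lam]
                       | i <- iota 1 n]).

Definition look (t : seq nat) (k : nat) : nat :=
  if (1 <= k) && (k <= size t) then nth 0 t k.-1 else 0.

Fixpoint gtab (j s lam m : nat) : seq nat :=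
  match m with
  | 0 => [::]
  | m'.+1 =>
    let t := gtab j s lam m' in
    let n := m'.+1 in
    let v := if n <= 3 + 2 * s + lam * j then wseq j s lam n
             else look t (n - s - look t (n - j)) + lam * j in
    rcons t v
  end.

(* g_{j,s,lam}(n) for n >= 1.  The recursion only refers to earlier values
   (the paper notes the definition is well defined), so the default 0 used
   for out-of-range indices is never used. *)
Definition gseq (j s lam n : nat) : nat := look (gtab j s lam n) n.

Definition has_freq (f : nat -> nat) (q k : nat) : Prop :=
  exists N, (forall n, N < n -> f n <> q) /\
            count (fun n => f n == q) (iota 1 N) = k.

(* Main.v *)
Require Import Defs.
From mathcomp Require Import all_boot zify.

Section W.
Variables (j s : nat).
Hypothesis hj : 1 <= j.

Definition P k := 1 + sumn [seq s + 1 + i * j | i <- iota 0 k].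

Lemma PS k : P k.+1 = P k + (s + 1 + k * j).
Proof.
rewrite /P -(addn1 k) iotaD map_cat sumn_cat /= add0n addn0 addnA //.
Qed.

Lemma P0 : P 0 = 1. Proof. by []. Qed.

Lemma P_ge k : k < P k.
Proof. elim: k => [|k IH]; rewrite ?PS //; lia. Qed.

Lemma P_mono a b : a <= b -> P a <= P b.
Proof.
move=> /subnKC <-; elim: (b - a) => [|d IH]; first by rewrite addn0.
rewrite addnS PS; lia.
Qed.

Lemma P_smono a b : a < b -> P a < P b.
Proof.
move=> h; have := @P_mono a.+1 b h; rewrite PS; lia.
Qed.

Lemma Lic_P i : 1 <= i -> Lic j s 1 i 1 = P i.+1.
Proof.
case: i => [//|i] _.
have H : forall i, s + 2 + sumn [seq s + 1 + 1 * l * j | l <- iota 1 i] = P i.+1.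
  elim=> [|k IH]; first by rewrite /P /=; lia.
  rewrite -(addn1 k) iotaD map_cat sumn_cat /= addnA IH [k + 1]addn1 (PS k.+1); lia.
rewrite /Lic /= H (PS i.+1); lia.
Qed.

Lemma blk_ex n : 1 <= n -> exists k, P k <= n < P k.+1.
Proof.
move=> hn.
have ex : exists k, n < P k by exists n; apply: P_ge.
case: (ex_minnP ex) => k hk hmin.
case: k hk hmin => [|k] hk hmin; first by rewrite P0 in hk; lia.
exists k; rewrite hk andbT leqNgt; apply/negP => h.
have := hmin _ h; lia.
Qed.

Lemma count_lt k N : k <= N -> count (fun i => i < k) (iota 0 N) = k.
Proof.
move=> /subnKC <-; rewrite iotaD count_cat add0n.
rewrite (eq_in_count (a2 := predT)); last by move=> x; rewrite mem_iota.
rewrite (eq_in_count (s := iota k _) (a2 := pred0)); last first.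
  by move=> x; rewrite mem_iota /=; lia.
by rewrite count_predT count_pred0 size_iota; lia.
Qed.

Lemma w_blk n k : P k <= n < P k.+1 -> wseq j s 1 n = 1 + j * k.
Proof.
move=> /andP [h1 h2].
have Hn : 1 <= n by have := P_ge k; lia.
rewrite /wseq; congr (1 + j * _).
have -> : s + 2 = P 1 by rewrite PS P0; lia.
have E : [seq sumn [seq nat_of_bool (Lic j s 1 i c <= n) | c <- iota 1 1] | i <- iota 1 n] = [seq nat_of_bool (P i.+1 <= n) | i <- iota 1 n].
  by apply/eq_in_map => i; rewrite mem_iota => /andP [hi _] /=; rewrite Lic_P // addn0.
rewrite E.
have -> : nat_of_bool (P 1 <= n) + sumn [seq nat_of_bool (P i.+1 <= n) | i <- iota 1 n]
  = sumn [seq nat_of_bool (P i.+1 <= n) | i <- iota 0 n.+1] by [].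
rewrite (sumn_count (fun i => P i.+1 <= n)).
rewrite (eq_in_count (a2 := fun i => i < k)); last first.
  move=> i _ /=; case: (ltnP i k) => h.
    by apply: leq_trans h1; apply: P_mono.
  by apply/negP => h'; have := @P_mono k.+1 i.+1 h; lia.
by apply: count_lt; have := P_ge k; lia.
Qed.

End W.

Lemma gtab_size j s lam m : size (gtab j s lam m) = m.
Proof. by elim: m => [|m IH] //=; rewrite size_rcons IH. Qed.

Lemma look_rcons t v k : k <= size t -> look (rcons t v) k = look t k.
Proof.
move=> hk; rewrite /look size_rcons.
case: k hk => [//|k] hk /=; rewrite hk ltnW // nth_rcons.
by have -> : k < size t by [].
Qed.

Lemma look_gtab j s lam m k : 1 <= k <= m -> look (gtab j s lam m) k = gseq j s lam k.
Proof.
elim: m => [|m IH] /andP [h1 h2]; first by lia.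
case: (ltnP k m.+1) => h.
  by rewrite /= look_rcons ?gtab_size // IH ?h1.
by have -> : k = m.+1 by lia.
Qed.

Lemma gseqS j s lam m : gseq j s lam m.+1 =
  (if m.+1 <= 3 + 2 * s + lam * j then wseq j s lam m.+1
   else look (gtab j s lam m) (m.+1 - s - look (gtab j s lam m) (m.+1 - j)) + lam * j).
Proof.
rewrite /gseq /= /look size_rcons gtab_size leqnn /= nth_rcons gtab_size ltnn eqxx //.
Qed.

Lemma g_eq_w j s (hj : 1 <= j) n : 1 <= n -> gseq j s 1 n = wseq j s 1 n.
Proof.
elim/ltn_ind: n => n IH hn.
case: n IH hn => [//|m] IH _.
rewrite gseqS; case: ifP => // hbig.
move/negbT: hbig; rewrite -ltnNge mul1n => hbig.
have [k /andP [hk1 hk2]] := @blk_ex j s hj m.+1 isT.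
have k2 : 2 <= k.
  rewrite leqNgt; apply/negP => hk.
  have E2 : P j s 2 = 2*s+j+3 by rewrite !PS P0; lia.
  have := @P_mono j s hj k.+1 2 hk; rewrite E2; lia.
case: k k2 hk1 hk2 => [|[|k']] // _ hk1 hk2.
have EB : P j s k'.+2 = P j s k'.+1 + (s + 1 + k'.+1 * j) by rewrite PS.
have EC : P j s k'.+3 = P j s k'.+2 + (s + 1 + k'.+2 * j) by rewrite PS.
have eX1 : k'.+1 * j = k' * j + j by rewrite mulSn addnC.
have eX2 : k'.+2 * j = k' * j + j + j by rewrite !mulSn; lia.
have eX3 : j * k'.+1 = k' * j + j by rewrite mulnC.
have eX4 : j * k'.+2 = k' * j + j + j by rewrite mulnC.
have PG := @P_ge j s hj k'.+1.
rewrite eX1 in EB; rewrite eX2 in EC.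
rewrite [look _ (m.+1 - j)]look_gtab; last by lia.
rewrite IH; [|lia|lia].
case: (ltnP (m.+1 - j) (P j s k'.+2)) => hc.
  rewrite (@w_blk j s hj _ k'.+1); last first. by apply/andP; split; lia.
  rewrite look_gtab; last by lia.
  rewrite IH; [|lia|lia].
  rewrite (@w_blk j s hj _ k'.+1); last by apply/andP; split; lia.
  rewrite (@w_blk j s hj _ k'.+2); last by apply/andP; split; lia.
  rewrite !mulnS; lia.
rewrite (@w_blk j s hj _ k'.+2); last by apply/andP; split; lia.
rewrite look_gtab; last by lia.
rewrite IH; [|lia|lia].
rewrite (@w_blk j s hj _ k'.+1); last by apply/andP; split; lia.
rewrite (@w_blk j s hj _ k'.+2); last by apply/andP; split; lia.
rewrite !mulnS; lia.
Qed.

Lemma g_blk j s (hj : 1 <= j) n k : P j s k <= n < P j s k.+1 -> gseq j s 1 n = 1 + j * k.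
Proof.
move=> h; have := @P_ge j s hj k => h2.
rewrite g_eq_w //; first by apply: w_blk.
move: h => /andP [h1 _]; lia.
Qed.

Lemma blk_le j s (hj : 1 <= j) n m a b :
  P j s a <= n < P j s a.+1 -> P j s b <= m < P j s b.+1 -> n <= m -> a <= b.
Proof.
move=> /andP [h1 h2] /andP [h3 h4] hnm; rewrite leqNgt; apply/negP => hba.
have := @P_mono j s hj b.+1 a hba; lia.
Qed.

Theorem theorem4p1 (j s : nat) (hj : 1 <= j) :
  (forall n m, 1 <= n -> n <= m -> gseq j s 1 n <= gseq j s 1 m) /\
  (forall n, 1 <= n -> gseq j s 1 n = 1 %[mod j]) /\
  (forall q, 0 < q ->
     has_freq (gseq j s 1) q (if q == 1 %[mod j] then q + s else 0)).
Proof.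
have gmod : forall n, 1 <= n -> gseq j s 1 n = 1 %[mod j].
  move=> n hn; have [k hk] := @blk_ex j s hj n hn.
  by rewrite (@g_blk j s hj _ _ hk) addnC mulnC modnMDl.
split.
  move=> n m hn hnm.
  have [a ha] := @blk_ex j s hj n hn.
  have [b hb] := @blk_ex j s hj m (leq_trans hn hnm).
  rewrite (@g_blk j s hj _ _ ha) (@g_blk j s hj _ _ hb) leq_add2l leq_mul2l.
  by rewrite (@blk_le j s hj _ _ _ _ ha hb hnm) orbT.
split => // q hq.
case: ifP => hqm; last first.
  exists 0; split => // n hn hE.
  by move: (gmod n hn); rewrite hE => /eqP; rewrite hqm.
have [k ek] : exists k, q = 1 + j * k.
  move/eqP: hqm => hqm.
  case: (ltngtP j 1) => hj1; first by lia.
    exists (q %/ j); rewrite {1}(divn_eq q j) hqm modn_small //; lia.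
  by exists (q - 1); rewrite -hj1; lia.
subst q.
have PG := @P_ge j s hj k.
have ES := PS j s k.
have HM := @P_mono j s hj.
exists (P j s k.+1).-1; split.
  move=> n hn; have hn1 : 1 <= n by case: n hn.
  have [b /andP [hb1 hb2]] := @blk_ex j s hj n hn1.
  rewrite (@g_blk j s hj _ b); last by rewrite hb1 hb2.
  have hkb : k < b.
    rewrite ltnNge; apply/negP => hbk; have := HM b.+1 k.+1 hbk; lia.
  have : j * k < j * b by rewrite ltn_pmul2l.
  lia.
have -> : (P j s k.+1).-1 = (P j s k).-1 + (P j s k.+1 - P j s k) by lia.
rewrite iotaD count_cat.
have -> : 1 + (P j s k).-1 = P j s k by lia.
rewrite (eq_in_count (a2 := pred0)); last first.
  move=> n; rewrite mem_iota => /andP [hn1 hn2] /=.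
  have [b /andP [hb1 hb2]] := @blk_ex j s hj n hn1.
  rewrite (@g_blk j s hj _ b); last by rewrite hb1 hb2.
  have hkb : b < k.
    rewrite ltnNge; apply/negP => hbk; have := HM _ _ hbk; lia.
  have : j * b < j * k by rewrite ltn_pmul2l.
  move=> h; apply/negbTE; apply/eqP; lia.
rewrite (eq_in_count (s := iota (P j s k) _) (a2 := predT)); last first.
  move=> n; rewrite mem_iota => /andP [hn1 hn2] /=.
  rewrite (@g_blk j s hj _ k) ?eqxx //; apply/andP; split; lia.
rewrite count_pred0 count_predT size_iota ES mulnC; lia.
Qed.
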